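(* Let $\ell,m,n$ be positive integers with $\ell<n$, $m<n$, $\gcd(m,n)=1$, and let $d\in\{1,\dots,n-1\}$ be the multiplicative inverse of $m$ modulo $n$. Let $\mathcal{U}$ be obtained from $\mathcal{F}[\ell,m,n]$ by changing the symbols at all indices congruent to $0$ and at all indices congruent to $\ell d$ modulo $n$. Then the $d$-th left shift of $\mathcal{U}$ equals $\mathcal{F}[\ell,m,n]$, i.e. $\mathcal{F}[\ell,m,n]^{\overline0\,\overline{\ell d}\,(d)}=\mathcal{F}[\ell,m,n]$.
   Context: For positive integers $\ell<n$, $m<n$ with $\gcd(m,n)=1$, $\mathcal{F}[\ell,m,n]:\mathbb{Z}\to\{L,R\}$ is defined by $\mathcal{F}[\ell,m,n]_i=L$ if $im\bmod n<\ell$ and $R$ otherwise. For a sequence $\mathcal{S}$ of period $n$: $\mathcal{S}^{(j)}_i=\mathcal{S}_{i+j}$ (the $j$-th left shift), and $\mathcal{S}^{\overline j}$ differs from $\mathcal{S}$ exactly at indices $\equiv j\pmod n$; superscript operations are applied from left to right. *)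

(* Defs.v *)
From mathcomp Require Import all_boot all_order all_algebra.
Set Implicit Arguments. Unset Strict Implicit. Unset Printing Implicit Defensive.
Import Order.TTheory GRing.Theory Num.Theory.

Inductive LR := L | R.

Definition swapLR (x : LR) : LR := match x with L => R | R => L end.

Definition lrseq := int -> LR.

Local Open Scope ring_scope.

Definition Fseq (l m n : nat) : lrseq :=
  fun i => if ((i * m%:Z) %% n%:Z)%Z < l%:Z then L else R.

Definition lshiftLR (j : int) (S : lrseq) : lrseq := fun i => S (i + j).

Definition flipmod (n : nat) (j : int) (S : lrseq) : lrseq :=
  fun i => if ((i - j) %% n%:Z)%Z == 0 then swapLR (S i) else S i.

(* Main.v *)
Require Import Defs.
From mathcomp Require Import all_boot all_order all_algebra.
From mathcomp Require Import zify ring.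
Import Order.TTheory GRing.Theory Num.Theory.
Local Open Scope ring_scope.

Lemma small_mod0 (n x : int) : 0 < n -> - n < x < n -> ((x %% n)%Z == 0) = (x == 0).
Proof.
move=> n0 /andP[h1 h2].
apply/eqP/eqP => [/dvdz_mod0P/dvdzP [k hk]|->]; last by rewrite mod0z.
rewrite hk in h1 h2 *.
have [k0|k0|->] := ltgtP k 0; last by rewrite mul0r.
  have : (0 <= (- k - 1) * n) by apply: mulr_ge0; lia.
  lia.
have : (0 <= (k - 1) * n) by apply: mulr_ge0; lia.
lia.
Qed.

Lemma modMD (n a b : int) : ((a * n + b) %% n)%Z = (b %% n)%Z.
Proof. exact: modzMDl. Qed.

Theorem corollary3p2 (l m n d : nat) :
  (0 < l)%N -> (0 < m)%N -> (l < n)%N -> (m < n)%N -> coprime m n ->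
  (1 <= d <= n.-1)%N -> (m * d %% n = 1 %% n)%N ->
  forall i : int,
    lshiftLR (Posz d) (flipmod n (Posz (l * d)) (flipmod n 0%R (Fseq l m n))) i
    = Fseq l m n i.
Proof.
move=> l0 m0 ln mn cop /andP[d1 dn] hmd i.
rewrite /lshiftLR /flipmod /Fseq.
have n2 : (1 < n)%N by lia.
have hmd' : (m * d = (m * d %/ n) * n + 1)%N.
  by rewrite {1}(divn_eq (m * d) n) hmd modn_small.
set t := (m * d %/ n)%N in hmd'.
have hmdz : (m%:Z * d%:Z = t%:Z * n%:Z + 1).
  by rewrite -!PoszM hmd' PoszD PoszM.
set q := ((i * m%:Z) %/ n%:Z)%Z.
set r := ((i * m%:Z) %% n%:Z)%Z.
have hr : i * m%:Z = q * n%:Z + r by rewrite /q /r -divz_eq.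
have r0 : 0 <= r by rewrite modz_ge0 //; lia.
have rn : r < n%:Z by rewrite ltz_pmod //; lia.
have cz : coprimez n m by rewrite coprimezE /= coprime_sym.
have key : forall x : int, ((x %% n)%Z == 0) = (((x * m%:Z) %% n)%Z == 0).
  move=> x; apply/idP/idP.
  - by move/eqP/dvdz_mod0P => h; apply/eqP/dvdz_mod0P; apply: dvdz_mulr.
  - move/eqP/dvdz_mod0P => h; apply/eqP/dvdz_mod0P.
    by rewrite -(Gauss_dvdzl x cz).
have hdm : d%:Z * m%:Z = t%:Z * n%:Z + 1 by rewrite mulrC.
have e1 : (i + d%:Z) * m%:Z = (q + t%:Z) * n%:Z + (r + 1).
  have -> : (i + d%:Z) * m%:Z = i * m%:Z + d%:Z * m%:Z by ring.
  rewrite hr hdm; ring.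
have e2 : (i + d%:Z - (l * d)%N%:Z) * m%:Z = (q + t%:Z - l%:Z * t%:Z) * n%:Z + (r + 1 - l%:Z).
  have -> : ((l * d)%N%:Z) = l%:Z * d%:Z by rewrite PoszM.
  have -> : (i + d%:Z - l%:Z * d%:Z) * m%:Z = i * m%:Z + d%:Z * m%:Z - l%:Z * (d%:Z * m%:Z) by ring.
  rewrite hr hdm; ring.
rewrite key e2 modMD (key (i + d%:Z - 0)) subr0 e1 modMD.
have nz : (0 < n%:Z) by lia.
rewrite (small_mod0 _ _ nz); last by apply/andP; split; lia.
have [rn1|rn1] := eqVneq (r + 1) n%:Z.
  have h1 : ((r + 1) %% n%:Z)%Z = 0 by rewrite rn1 modzz.
  rewrite h1 eqxx.
  have -> : (r + 1 - l%:Z == 0) = false by apply/eqP; lia.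
  have -> : (0 < l%:Z) = true by lia.
  have -> : (r < l%:Z) = false by lia.
  by [].
rewrite (small_mod0 _ _ nz); last by apply/andP; split; lia.
rewrite modz_small; last by apply/andP; split; lia.
have -> : (r + 1 == 0) = false by apply/eqP; lia.
have [rl|rl] := eqVneq (r + 1 - l%:Z) 0.
  have -> : (r + 1 < l%:Z) = false by lia.
  have -> : (r < l%:Z) = true by lia.
  by [].
have -> : (r + 1 < l%:Z) = (r < l%:Z) by apply/idP/idP; lia.
by case: (r < l%:Z).
Qed.
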